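(* Let $\mathcal{P}$ be a collection of cells. Let $a=(i,j)$, $b=(k,l)$ with $i<k$, $j<l$, and $\beta=(p,q)$ with $p>k$, $q>l$, and suppose $[a,b]$ and $[\alpha,\beta]$ with $\alpha=(i,l)$ are inner intervals of $\mathcal{P}$ (so $\alpha$ is the upper left corner $c$ of $[a,b]$). Put $c=\alpha=(i,l)$, $d=(k,j)$, $\gamma=(i,q)$, $\delta=(p,l)$, $h=(k,q)$, $r=(p,j)$. Let $<^{\mathsf{P}}$ be a $\mathsf{P}$-order on $V(\mathcal{P})$ and suppose that the leading monomials of $f_{a,b}$ and $f_{\alpha,\beta}$ with respect to $<^{\mathsf{P}}_{\mathrm{lex}}$ are not coprime. Then $S(f_{a,b},f_{\alpha,\beta})$ reduces to $0$ modulo $\mathcal{G}$ with respect to $<^{\mathsf{P}}_{\mathrm{lex}}$ if and only if one of the following holds: (1) $x_dx_\delta x_\gamma<^{\mathsf{P}}_{\mathrm{lex}}x_\beta x_ax_b$, and ($h,\delta<^{\mathsf{P}}b$ or $h,\delta<^{\mathsf{P}}\beta$); (2) $x_dx_\delta x_\gamma<^{\mathsf{P}}_{\mathrm{lex}}x_\beta x_ax_b$, $[d,\delta]$ is an inner interval of $\mathcal{P}$, and ($r,\gamma<^{\mathsf{P}}a$ or $r,\gamma<^{\mathsf{P}}\beta$); (3) $x_\beta x_ax_b<^{\mathsf{P}}_{\mathrm{lex}}x_dx_\delta x_\gamma$, and ($h,a<^{\mathsf{P}}d$ or $h,a<^{\mathsf{P}}\gamma$); (4) $x_\beta x_ax_b<^{\mathsf{P}}_{\mathrm{lex}}x_dx_\delta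 x_\gamma$, $[d,\delta]$ is an inner interval of $\mathcal{P}$, and ($r,b<^{\mathsf{P}}d$ or $r,b<^{\mathsf{P}}\delta$).
   Context: For $a=(i,j), b=(k,l)\in\mathbb{Z}^2$ with $a\le b$ componentwise, the interval $[a,b]=\{(m,n)\in\mathbb{Z}^2: i\le m\le k,\ j\le n\le l\}$; it is proper if $i<k$ and $j<l$, in which case $a,b$ are its diagonal corners and $(i,l)$ (upper left), $(k,j)$ (lower right) its anti-diagonal corners. A cell is a proper interval $[v,v+(1,1)]$; its vertices are its four corners. A collection of cells $\mathcal{P}$ is a nonempty finite set of cells; $V(\mathcal{P})$ is the set of all vertices of its cells. A proper interval $[a,b]$ is an inner interval of $\mathcal{P}$ if every cell $[v,v+(1,1)]\subseteq[a,b]$ belongs to $\mathcal{P}$. Let $K$ be a field and $S=K[x_v: v\in V(\mathcal{P})]$. For an inner interval $[a,b]$ with upper left corner $c$ and lower right corner $d$, put $f_{a,b}=x_ax_b-x_cx_d$; $\mathcal{G}$ is the set of all such inner 2-minors of $\mathcal{P}$. A $\mathsf{P}$-order is a total order $<^{\mathsf{P}}$ on $V(\mathcal{P})$; $<^{\mathsf{P}}_{\mathrm{lex}}$ is the lexicographic monomial order on $S$ with $x_u<x_v\iff u<^{\mathsf{P}}v$. For vertices $u,v,w$, ''$u,v<^{\mathsf{P}}w$'' means $u<^{\mathsf{P}}w$ and $v<^{\mathsf{P}}w$. *)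

(* Defs.v *)
From HB Require Import structures.
From mathcomp Require Import all_boot all_order all_algebra.
From mathcomp Require Import mpoly.
Set Implicit Arguments. Unset Strict Implicit. Unset Printing Implicit Defensive.
Import Order.TTheory GRing.Theory Num.Theory.
Local Open Scope ring_scope.

Definition pt := (int * int)%type.

(* A collection of cells is given by the (nonempty, finite) list of the
   lower-left corners v of its cells [v, v+(1,1)]. *)
Definition cell_vertices (v : pt) : seq pt :=
  [:: v; (v.1 + 1, v.2); (v.1, v.2 + 1); (v.1 + 1, v.2 + 1)].

Definition vertices (P : seq pt) : seq pt :=
  undup (flatten [seq cell_vertices v | v <- P]).

Definition inner_interval (P : seq pt) (a b : pt) : Prop :=
  a.1 < b.1 /\ a.2 < b.2 /\
  forall v : pt, a.1 <= v.1 -> v.1 + 1 <= b.1 -> a.2 <= v.2 -> v.2 + 1 <= b.2 ->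
    v \in P.

(* A P-order on V(P) is encoded by the list [ord] of the vertices of P in
   increasing order (uniq ord, ord =i vertices P).  u <P w iff u comes
   before w in ord. *)
Definition is_Porder (P : seq pt) (ord : seq pt) : Prop :=
  uniq ord /\ ord =i vertices P.

Definition Plt (ord : seq pt) (u w : pt) : bool := (index u ord < index w ord)%N.

(* The variable x_v is the variable of index (index v ord) of
   S = K[x_0, ..., x_{n-1}], n = size ord. *)
Definition mvar (ord : seq pt) (v : pt) : 'X_{1..size ord} :=
  if insub (index v ord) is Some i then mnm1 i else mnm0.

Definition xv (K : fieldType) (ord : seq pt) (v : pt) : {mpoly K[size ord]} :=
  'X_[mvar ord v].

(* Lexicographic order induced by the P-order: x_u < x_v iff u <P v,
   i.e. the variable with larger index is larger. m1 < m2 iff at the largest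
   variable where the exponents differ, m1 has the smaller exponent. *)
Definition lexlt n (m1 m2 : 'X_{1..n}) : bool :=
  [exists i : 'I_n, (m1 i < m2 i)%N &&
     [forall j : 'I_n, (i < j)%N ==> (m1 j == m2 j)]].

Definition lexle n (m1 m2 : 'X_{1..n}) : bool := (m1 == m2) || lexlt m1 m2.

(* Leading monomial (w.r.t. lexlt) of a polynomial; mnm0 for p = 0. *)
Definition lmon (K : fieldType) n (p : {mpoly K[n]}) : 'X_{1..n} :=
  foldr (fun m acc => if lexlt acc m then m else acc)
        (head mnm0 (msupp p)) (msupp p).

Definition lcoef (K : fieldType) n (p : {mpoly K[n]}) : K := p@_(lmon p).

Definition mcoprime n (m1 m2 : 'X_{1..n}) : bool :=
  [forall i : 'I_n, (m1 i == 0%N) || (m2 i == 0%N)].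

Definition spoly (K : fieldType) n (f g : {mpoly K[n]}) : {mpoly K[n]} :=
  let L := mlcm (lmon f) (lmon g) in
  (lcoef f)^-1 *: ('X_[mnm_sub L (lmon f)] * f)
  - (lcoef g)^-1 *: ('X_[mnm_sub L (lmon g)] * g).

Definition fab (K : fieldType) (ord : seq pt) (a b : pt) : {mpoly K[size ord]} :=
  xv K ord a * xv K ord b - xv K ord (a.1, b.2) * xv K ord (b.1, a.2).

Definition inG (K : fieldType) (P ord : seq pt) (g : {mpoly K[size ord]}) : Prop :=
  exists a b, inner_interval P a b /\ g = fab K ord a b.

(* f reduces to 0 modulo G (w.r.t. lex): f has a standard expression
   f = sum_i u_i g_i with g_i in G and in(u_i g_i) <= in(f) whenever
   u_i g_i <> 0 (Herzog--Hibi). *)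
Definition reduces_to_zero (K : fieldType) (P ord : seq pt)
    (f : {mpoly K[size ord]}) : Prop :=
  exists s : seq ({mpoly K[size ord]} * {mpoly K[size ord]}),
    [/\ forall ug, ug \in s -> inG P ug.2,
        f = \sum_(ug <- s) ug.1 * ug.2 &
        forall ug, ug \in s -> ug.1 * ug.2 != 0 -> lexle (lmon (ug.1 * ug.2)) (lmon f)].

Definition mon3 (ord : seq pt) (u v w : pt) : 'X_{1..size ord} :=
  mnm_add (mnm_add (mvar ord u) (mvar ord v)) (mvar ord w).

(* Main.v *)
Require Import Defs.
From HB Require Import structures.
From mathcomp Require Import all_boot all_order all_algebra.
From mathcomp Require Import mpoly.
From mathcomp Require Import zify ring.
Set Implicit Arguments. Unset Strict Implicit. Unset Printing Implicit Defensive.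
Import Order.TTheory GRing.Theory Num.Theory.
Local Open Scope ring_scope.



Lemma lexlt_addr n (m1 m2 m : 'X_{1..n}) :
  lexlt (m1 + m)%MM (m2 + m)%MM = lexlt m1 m2.
Proof.
apply: eq_existsb => x; rewrite !mnmDE ltn_add2r; congr andb.
by apply: eq_forallb => y; rewrite !mnmDE eqn_add2r.
Qed.

Lemma lexlt_addl n (m1 m2 m : 'X_{1..n}) :
  lexlt (m + m1)%MM (m + m2)%MM = lexlt m1 m2.
Proof. by rewrite ![(m + _)%MM]addmC lexlt_addr. Qed.

Lemma lexlt_irr n (m : 'X_{1..n}) : ~~ lexlt m m.
Proof. by apply/existsP => -[x]; rewrite ltnn. Qed.

Lemma lexlt_trans n (m1 m2 m3 : 'X_{1..n}) :
  lexlt m1 m2 -> lexlt m2 m3 -> lexlt m1 m3.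
Proof.
move=> /existsP [x /andP [lx /forallP ex]] /existsP [y /andP [ly /forallP ey]].
apply/existsP; case: (ltngtP x y) => [xy|yx|/val_inj xy].
- exists y; rewrite (eqP (implyP (ex y) xy)) ly /=.
  apply/forallP => z; apply/implyP => yz.
  by rewrite (eqP (implyP (ex z) (ltn_trans xy yz))) (implyP (ey z) yz).
- exists x; rewrite -(eqP (implyP (ey x) yx)) lx /=.
  apply/forallP => z; apply/implyP => xz.
  by rewrite (eqP (implyP (ex z) xz)) (implyP (ey z) (ltn_trans yx xz)).
- subst y; exists x; rewrite (ltn_trans lx ly) /=.
  apply/forallP => z; apply/implyP => xz.
  by rewrite (eqP (implyP (ex z) xz)) (implyP (ey z) xz).
Qed.

Lemma lexlt_asym n (m1 m2 : 'X_{1..n}) : lexlt m1 m2 -> ~~ lexlt m2 m1.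
Proof.
by move=> h; apply/negP => h'; have := lexlt_trans h h'; rewrite (negbTE (lexlt_irr _)).
Qed.

Lemma lexlt_total n (m1 m2 : 'X_{1..n}) : m1 != m2 -> lexlt m1 m2 || lexlt m2 m1.
Proof.
move=> ne.
have [x0 hx0] : exists x, m1 x != m2 x.
  apply/existsP; apply: contraR ne; rewrite negb_exists => /forallP h.
  by apply/eqP/mnmP => x; apply/eqP; have := h x; rewrite negbK.
case: (@arg_maxnP _ x0 (fun x => m1 x != m2 x) val hx0) => x hx hmax.
have hup : forall y : 'I_n, (x < y)%N -> m1 y == m2 y.
  move=> y xy; apply: contraTT xy => hy; rewrite -leqNgt; exact: hmax.
case: (ltngtP (m1 x) (m2 x)) => [lt|gt|eq]; last by rewrite eq eqxx in hx.
- apply/orP; left; apply/existsP; exists x; rewrite lt /=.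
  by apply/forallP => y; apply/implyP; apply: hup.
- apply/orP; right; apply/existsP; exists x; rewrite gt /=.
  by apply/forallP => y; apply/implyP => /hup /eqP ->.
Qed.

Lemma lexle_trans n (m1 m2 m3 : 'X_{1..n}) :
  lexle m1 m2 -> lexle m2 m3 -> lexle m1 m3.
Proof.
rewrite /lexle => /orP [/eqP -> //|h1] /orP [/eqP <-|h2]; first by rewrite h1 orbT.
by rewrite (lexlt_trans h1 h2) orbT.
Qed.

Lemma lexle_lt_trans n (m1 m2 m3 : 'X_{1..n}) :
  lexle m1 m2 -> lexlt m2 m3 -> lexlt m1 m3.
Proof. by rewrite /lexle => /orP [/eqP -> //|h1] h2; apply: lexlt_trans h1 h2. Qed.

Lemma lexleNgt n (m1 m2 : 'X_{1..n}) : lexle m1 m2 = ~~ lexlt m2 m1.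
Proof.
rewrite /lexle; case: (eqVneq m1 m2) => [->|ne] /=; first by rewrite lexlt_irr.
have := lexlt_total ne; case h: (lexlt m1 m2) => /=.
  by rewrite (negbTE (lexlt_asym h)).
by move=> ->.
Qed.

Lemma lexle_addr n (m1 m2 m : 'X_{1..n}) :
  lexle (m1 + m)%MM (m2 + m)%MM = lexle m1 m2.
Proof. by rewrite !lexleNgt lexlt_addr. Qed.



Lemma lexle_refl n (m : 'X_{1..n}) : lexle m m.
Proof. by rewrite /lexle eqxx. Qed.

Lemma lexle_anti n (m1 m2 : 'X_{1..n}) : lexle m1 m2 -> lexle m2 m1 -> m1 = m2.
Proof.
rewrite /lexle => /orP [/eqP //|h1] /orP [/eqP //|h2].
by have := lexlt_trans h1 h2; rewrite (negbTE (lexlt_irr _)).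
Qed.

Lemma foldr_lex n (s : seq 'X_{1..n}) x0 :
  let r := foldr (fun m acc => if lexlt acc m then m else acc) x0 s in
  r \in x0 :: s /\ forall m, m \in x0 :: s -> lexle m r.
Proof.
elim: s => [|y s IH] /=.
  by split; [rewrite inE eqxx | move=> m; rewrite inE => /eqP ->; apply: lexle_refl].
set r := foldr _ _ _ in IH *; case: IH => rin rmax.
case: ifP => hlt; split.
- by rewrite !inE eqxx orbT.
- move=> m; rewrite !inE => /orP [/eqP ->|/orP [/eqP ->|ms]].
  + by apply: lexle_trans (rmax _ (mem_head _ _)) _; rewrite /lexle hlt orbT.
  + exact: lexle_refl.
  + by apply: lexle_trans (rmax m _) _; [rewrite inE ms orbT| rewrite /lexle hlt orbT].
- by move: rin; rewrite !inE => /orP [->|->]; rewrite ?orbT.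
- move=> m; rewrite !inE => /orP [/eqP ->|/orP [/eqP ->|ms]].
  + exact: rmax (mem_head _ _).
  + by rewrite lexleNgt hlt.
  + by apply: rmax; rewrite inE ms orbT.
Qed.

Lemma lmon_max (K : fieldType) n (p : {mpoly K[n]}) : p != 0 ->
  lmon p \in msupp p /\ forall m, m \in msupp p -> lexle m (lmon p).
Proof.
move=> pn0; rewrite /lmon.
have : msupp p != [::] by rewrite msupp_eq0.
case: (msupp p) => [//|y s] _ /=.
move: (foldr_lex (y :: s) y) => /= [h1 h2]; split.
  by move: h1; rewrite [_ \in y :: y :: s]inE => /orP [/eqP ->|->]; rewrite ?mem_head.
by move=> m ms; apply: h2; rewrite inE ms orbT.
Qed.

Lemma lmon_eq (K : fieldType) n (p : {mpoly K[n]}) m :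
  m \in msupp p -> (forall m', m' \in msupp p -> lexle m' m) -> lmon p = m.
Proof.
move=> mp hm.
have pn0 : p != 0 by apply: contraTneq mp => ->; rewrite msupp0.
have [h1 h2] := lmon_max pn0.
by apply: lexle_anti (hm _ h1) (h2 _ mp).
Qed.

Lemma lmon_in (K : fieldType) n (p : {mpoly K[n]}) m :
  m \in msupp p -> lexle m (lmon p).
Proof.
move=> mp; have pn0 : p != 0 by apply: contraTneq mp => ->; rewrite msupp0.
by have [_ h2] := lmon_max pn0; apply: h2.
Qed.

Lemma coef_binom (K : fieldType) n (c : K) (m1 m2 m : 'X_{1..n}) :
  (c *: ('X_[m1] - 'X_[m2]))@_m = c * ((m1 == m)%:R - (m2 == m)%:R).
Proof. by rewrite mcoeffZ mcoeffB !mcoeffX. Qed.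

Lemma lmon_binom (K : fieldType) n (c : K) (m1 m2 : 'X_{1..n}) :
  c != 0 -> lexlt m2 m1 -> lmon (c *: ('X_[m1] - 'X_[m2])) = m1.
Proof.
move=> cn0 lt; have ne : m1 != m2.
  by apply: contraTneq lt => ->; rewrite lexlt_irr.
apply: lmon_eq.
  by rewrite mcoeff_msupp coef_binom eqxx (eq_sym m2 m1) (negbTE ne) subr0 mulr1.
move=> m'; rewrite mcoeff_msupp coef_binom.
case: (eqVneq m1 m') => [->|_]; first by rewrite lexle_refl.
case: (eqVneq m2 m') => [<-|_]; first by rewrite /lexle lt orbT.
by rewrite subrr mulr0 eqxx.
Qed.

Lemma binom_neq0 (K : fieldType) n (c : K) (m1 m2 : 'X_{1..n}) :
  c != 0 -> m1 != m2 -> c *: ('X_[m1] - 'X_[m2]) != 0.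
Proof.
move=> cn0 ne; apply/eqP => /(congr1 (mcoeff m1)).
by rewrite coef_binom mcoeff0 eqxx (eq_sym m2 m1) (negbTE ne) subr0 mulr1; apply/eqP.
Qed.



Lemma coefMX_nz (K : fieldType) n (u : {mpoly K[n]}) m M :
  (u * 'X_[m])@_M != 0 -> exists2 mu, mu \in msupp u & (m + mu)%MM = M.
Proof.
rewrite -mcoeff_msupp (perm_mem (msuppMX u m)) => /mapP [mu h ->].
by exists mu.
Qed.

Lemma key_ord (K : fieldType) n (u : {mpoly K[n]}) (m1 m2 mu L : 'X_{1..n}) :
  lexlt m2 m1 -> mu \in msupp u ->
  lexle (lmon (u * ('X_[m1] - 'X_[m2]))) L ->
  lexle (mu + m1)%MM L /\ lexle (mu + m2)%MM L.
Proof.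
move=> lt mus hL.
have un0 : u != 0 by apply: contraTneq mus => ->; rewrite msupp0.
have [lin lmax] := lmon_max un0.
set lam := lmon u in lin lmax.
have c2 : (u * 'X_[m2])@_(lam + m1)%MM = 0.
  apply/eqP; apply: contraT => /coefMX_nz [nu nus e].
  have := lmax _ nus; rewrite -(lexle_addr _ _ m2) addmC e lexleNgt.
  by rewrite lexlt_addl lt.
have c1 : (u * ('X_[m1] - 'X_[m2]))@_(lam + m1)%MM != 0.
  by rewrite mulrBr mcoeffB c2 subr0 addmC mcoeffMX -mcoeff_msupp.
rewrite -mcoeff_msupp in c1.
have hN := lexle_trans (lmon_in c1) hL.
have h1 : lexle (mu + m1)%MM L.
  by apply: lexle_trans hN; rewrite lexle_addr; apply: lmax.
split=> //; apply: lexle_trans h1.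
by rewrite /lexle ![(mu + _)%MM]addmC lexlt_addr lt orbT.
Qed.

Lemma lmon_opp (K : fieldType) n (p : {mpoly K[n]}) : lmon (- p) = lmon p.
Proof.
case: (eqVneq p 0) => [->|pn0]; first by rewrite oppr0.
have [h1 h2] := lmon_max pn0.
by apply: lmon_eq; rewrite ?(perm_mem (msuppN p)) // => m; rewrite (perm_mem (msuppN p)); apply: h2.
Qed.

Lemma key (K : fieldType) n (u : {mpoly K[n]}) (m1 m2 M L : 'X_{1..n}) :
  m1 != m2 ->
  (u * ('X_[m1] - 'X_[m2]))@_M != 0 ->
  lexle (lmon (u * ('X_[m1] - 'X_[m2]))) L ->
  exists mu, ((mu + m1)%MM = M \/ (mu + m2)%MM = M) /\
    lexle (mu + m1)%MM L /\ lexle (mu + m2)%MM L.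
Proof.
move=> ne hc hL.
have [mu [mus hmu]] : exists mu : 'X_{1..n}, mu \in msupp u /\ ((mu + m1)%MM = M \/ (mu + m2)%MM = M).
  move: hc; rewrite mulrBr mcoeffB.
  case: (eqVneq (u * 'X_[m1])@_M 0) => [e|/coefMX_nz [mu h1 h2]]; last first.
    by move=> _; exists mu; split => //; left; rewrite addmC.
  rewrite e sub0r oppr_eq0 => /coefMX_nz [mu h1 h2].
  by exists mu; split => //; right; rewrite addmC.
exists mu; split=> //.
have [lt|lt] := orP (lexlt_total ne).
  have hL' : lexle (lmon (u * ('X_[m2] - 'X_[m1]))) L.
    by rewrite -opprB mulrN lmon_opp.
  by have [] := key_ord lt mus hL'.
exact: key_ord lt mus hL.
Qed.



Lemma lexlt_quad_aux n (x y z w : 'I_n) :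
  (maxn x y < maxn z w)%N ->
  lexlt (U_(x) + U_(y))%MM (U_(z) + U_(w))%MM.
Proof.
move=> lt.
have [t [tzw tmax]] : exists t, (t = z \/ t = w) /\ val t = maxn z w.
  case: (leqP z w) => zw'; [exists w | exists z].
    by split; [right| simpl; lia].
  by split; [left| simpl; lia].
apply/existsP; exists t; rewrite !mnmDE !mnm1E.
have hx : (x == t) = false.
  by apply/negbTE; apply: contraTneq lt => ->; rewrite -tmax -leqNgt leq_maxl.
have hy : (y == t) = false.
  by apply/negbTE; apply: contraTneq lt => ->; rewrite -tmax -leqNgt leq_maxr.
rewrite hx hy /=; apply/andP; split.
  by case: tzw => ->; rewrite eqxx ?addn1 ?add1n.
apply/forallP => j; apply/implyP => tj; rewrite !mnmDE !mnm1E.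
have ne : forall v : 'I_n, (v <= maxn z w)%N -> (v == j) = false.
  by move=> v hv; apply/negbTE; apply: contraTneq hv => ->; rewrite -tmax -ltnNge.
by rewrite !ne //; lia.
Qed.

Lemma lexlt_quad n (x y z w : 'I_n) :
  x != z -> x != w -> y != z -> y != w ->
  lexlt (U_(x) + U_(y))%MM (U_(z) + U_(w))%MM = (maxn x y < maxn z w)%N.
Proof.
move=> xz xw yz yw; apply/idP/idP; last exact: lexlt_quad_aux.
apply: contraTT; rewrite -leqNgt => le.
have ne : maxn z w != maxn x y.
  rewrite -!val_eqE /= in xz xw yz yw.
  by case: (leqP z w) => ?; case: (leqP x y) => ?; lia.
have lt' : (maxn z w < maxn x y)%N by rewrite ltn_neqAle ne le.
by apply: lexlt_asym; apply: lexlt_quad_aux.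
Qed.

Lemma mcoprime_quad n (x y z w : 'I_n) :
  x != z -> x != w -> y != z -> y != w ->
  mcoprime (U_(x) + U_(y))%MM (U_(z) + U_(w))%MM.
Proof.
move=> xz xw yz yw.
apply/forallP => t; rewrite !mnmDE !mnm1E.
have dis : forall u v : 'I_n, u != v -> ~~ ((u == t) && (v == t)).
  by move=> u v; apply: contra => /andP [/eqP -> /eqP ->].
move: (dis _ _ xz) (dis _ _ xw) (dis _ _ yz) (dis _ _ yw).
by case: (x == t); case: (y == t); case: (z == t); case: (w == t).
Qed.

Lemma mlcm_tri n (x y z : 'I_n) :
  x != y -> x != z -> y != z ->
  [/\ mlcm (U_(x) + U_(y))%MM (U_(x) + U_(z))%MM = (U_(x) + U_(y) + U_(z))%MM,
      mnm_sub (U_(x) + U_(y) + U_(z))%MM (U_(x) + U_(y))%MM = U_(z)%MM &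
      mnm_sub (U_(x) + U_(y) + U_(z))%MM (U_(x) + U_(z))%MM = U_(y)%MM].
Proof.
move=> xy xz yz.
have dis : forall t (u v : 'I_n), u != v -> ~~ ((u == t) && (v == t)).
  by move=> t u v; apply: contra => /andP [/eqP -> /eqP ->].
split; apply/mnmP => t; rewrite /mlcm !mnmE;
move: (dis t _ _ xy) (dis t _ _ xz) (dis t _ _ yz);
by case: (x == t); case: (y == t); case: (z == t).
Qed.

Lemma mvarP (ord : seq pt) v : v \in ord ->
  exists i : 'I_(size ord), val i = index v ord /\ mvar ord v = U_(i)%MM.
Proof.
move=> vin; have h : (index v ord < size ord)%N by rewrite index_mem.
exists (Ordinal h); split=> //; rewrite /mvar insubT //.
Qed.



Lemma cell_vert (P : seq pt) e v : e \in P -> v \in cell_vertices e -> v \in vertices P.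
Proof.
by move=> eP vc; rewrite /vertices mem_undup; apply/flatten_mapP; exists e.
Qed.

Lemma inner_corners (P : seq pt) (x y : pt) : inner_interval P x y ->
  [/\ x \in vertices P, y \in vertices P, (x.1, y.2) \in vertices P &
      (y.1, x.2) \in vertices P].
Proof.
case: x y => [x1 x2] [y1 y2] [/= h1 [h2 hc]].
split.
- apply: (@cell_vert _ (x1, x2)); first by apply: hc => /=; lia.
  by rewrite mem_head.
- apply: (@cell_vert _ (y1 - 1, y2 - 1)); first by apply: hc => /=; lia.
  by rewrite /cell_vertices /= !subrK !inE eqxx !orbT.
- apply: (@cell_vert _ (x1, y2 - 1)); first by apply: hc => /=; lia.
  by rewrite /cell_vertices /= !subrK !inE eqxx !orbT.
- apply: (@cell_vert _ (y1 - 1, x2)); first by apply: hc => /=; lia.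
  by rewrite /cell_vertices /= !subrK !inE eqxx !orbT.
Qed.

Lemma inner_sub (P : seq pt) (x y x' y' : pt) : inner_interval P x y ->
  x.1 <= x'.1 -> x'.1 < y'.1 -> y'.1 <= y.1 ->
  x.2 <= x'.2 -> x'.2 < y'.2 -> y'.2 <= y.2 -> inner_interval P x' y'.
Proof.
move=> [_ [_ hc]] *; split=> //; split=> // v *; apply: hc; lia.
Qed.

Lemma inner_ah (P : seq pt) (i j k l p q : int) :
  i < k -> j < l -> k < p -> l < q ->
  inner_interval P (i, j) (k, l) -> inner_interval P (i, l) (p, q) ->
  inner_interval P (i, j) (k, q).
Proof.
move=> ik jl kp lq [_ [_ h1]] [_ [_ h2]]; split=> //=; split=> /=; first by lia.
move=> v *; case: (ltP (v.2 + 1) (l + 1)) => hv.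
  by apply: h1 => /=; lia.
by apply: h2 => /=; lia.
Qed.

Lemma inner_aB (P : seq pt) (i j k l p q : int) :
  i < k -> j < l -> k < p -> l < q ->
  inner_interval P (i, j) (k, l) -> inner_interval P (i, l) (p, q) ->
  inner_interval P (k, j) (p, l) ->
  inner_interval P (i, j) (p, q).
Proof.
move=> ik jl kp lq [_ [_ h1]] [_ [_ h2]] [_ [_ h3]]; split=> //=; first by lia.
split=> /=; first by lia.
move=> v *; case: (ltP (v.2 + 1) (l + 1)) => hv.
  case: (ltP (v.1 + 1) (k + 1)) => hv'.
    by apply: h1 => /=; lia.
  by apply: h3 => /=; lia.
by apply: h2 => /=; lia.
Qed.

Lemma index_neq (ord : seq pt) x y : x \in ord -> x != y -> index x ord != index y ord.
Proof.
move=> xin; apply: contraNneq => e.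
by rewrite -(nth_index x xin) e nth_index //; move: xin; rewrite -index_mem e index_mem.
Qed.



Lemma lmon_binom' (K : fieldType) n (m1 m2 : 'X_{1..n}) : m1 != m2 ->
  lmon ('X_[m1] - 'X_[m2] : {mpoly K[n]}) = if lexlt m1 m2 then m2 else m1.
Proof.
move=> ne; case: ifP => h.
  rewrite -opprB -scaleN1r lmon_binom //; by rewrite oppr_eq0 oner_eq0.
rewrite -[X in lmon X]scale1r lmon_binom ?oner_eq0 //.
by have := lexlt_total ne; rewrite h.
Qed.

Lemma lmon_binom_le (K : fieldType) n (c : K) (m1 m2 L : 'X_{1..n}) :
  c != 0 -> m1 != m2 -> lexle m1 L -> lexle m2 L ->
  lexle (lmon (c *: ('X_[m1] - 'X_[m2]))) L.
Proof.
move=> cn0 ne h1 h2; have [lt|lt] := orP (lexlt_total ne).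
  by rewrite -opprB scalerN -scaleNr lmon_binom // oppr_eq0.
by rewrite lmon_binom.
Qed.

Lemma mem3 n (mu : 'X_{1..n}) (x y p1 p2 p3 : 'I_n) :
  (mu + (U_(x) + U_(y)))%MM = (U_(p1) + U_(p2) + U_(p3))%MM ->
  ((x == p1) || (x == p2) || (x == p3)) /\ ((y == p1) || (y == p2) || (y == p3)).
Proof.
move=> e; split.
  move/(congr1 (fun m : 'X_{1..n} => m x)): e; rewrite !mnmDE !mnm1E eqxx.
  by rewrite !(eq_sym x); case: (p1 == x); case: (p2 == x); case: (p3 == x) => //=; lia.
move/(congr1 (fun m : 'X_{1..n} => m y)): e; rewrite !mnmDE !mnm1E eqxx.
by rewrite !(eq_sym y); case: (p1 == y); case: (p2 == y); case: (p3 == y) => //=; lia.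
Qed.

Lemma cancel3 n (mu : 'X_{1..n}) (x y z : 'I_n) :
  (mu + (U_(x) + U_(y)))%MM = (U_(x) + U_(y) + U_(z))%MM -> mu = U_(z)%MM.
Proof.
move=> e; apply/mnmP => t; move/(congr1 (fun m : 'X_{1..n} => m t)): e.
rewrite !mnmDE !mnm1E; lia.
Qed.

Lemma quad_neq n (x y z w : 'I_n) : x != z -> x != w ->
  (U_(x) + U_(y))%MM != (U_(z) + U_(w))%MM.
Proof.
move=> xz xw; apply/eqP => /(congr1 (fun m : 'X_{1..n} => m x)).
by rewrite !mnmDE !mnm1E eqxx !(eq_sym _ x) (negbTE xz) (negbTE xw); case: (y == x).
Qed.

Lemma tri_neq n (x y z p1 p2 p3 : 'I_n) : x != p1 -> x != p2 -> x != p3 ->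
  (U_(x) + U_(y) + U_(z))%MM != (U_(p1) + U_(p2) + U_(p3))%MM.
Proof.
move=> h1 h2 h3; apply/eqP => /(congr1 (fun m : 'X_{1..n} => m x)).
by rewrite !mnmDE !mnm1E eqxx !(eq_sym _ x) (negbTE h1) (negbTE h2) (negbTE h3);
  case: (y == x); case: (z == x).
Qed.

Lemma rot3 n (x y z : 'X_{1..n}) : (x + y + z)%MM = (y + z + x)%MM.
Proof. by apply/mnmP => t; rewrite !mnmDE; lia. Qed.

Lemma sw3 n (x y z : 'X_{1..n}) : (x + y + z)%MM = (x + z + y)%MM.
Proof. by apply/mnmP => t; rewrite !mnmDE; lia. Qed.

Lemma lexlt_tri n (x y z w v : 'I_n) :
  x != z -> x != w -> y != z -> y != w ->
  lexlt (U_(x) + U_(y) + U_(v))%MM (U_(z) + U_(w) + U_(v))%MM = (maxn x y < maxn z w)%N.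
Proof. by move=> *; rewrite lexlt_addr lexlt_quad. Qed.

Lemma grid_cases (i j k l p q : int) (x y : pt) :
  i < k -> j < l -> k < p -> l < q -> x.1 < y.1 -> x.2 < y.2 ->
  x \in [:: (p, q); (i, j); (k, l)] -> y \in [:: (p, q); (i, j); (k, l)] ->
  [\/ x = (i, j) /\ y = (k, l), x = (i, j) /\ y = (p, q) | x = (k, l) /\ y = (p, q)].
Proof.
case: x y => [x1 x2] [y1 y2] /= ik jl kp lq h1 h2.
rewrite !inE => /or3P [] /eqP [? ?] /or3P [] /eqP [? ?]; subst;
  first [lia | by constructor 1 | by constructor 2 | by constructor 3].
Qed.

Lemma grid_anti (i j k l p q : int) (x y : pt) :
  i < k -> j < l -> k < p -> l < q -> x.1 < y.1 -> x.2 < y.2 ->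
  (x.1, y.2) \in [:: (p, q); (i, j); (k, l)] -> (y.1, x.2) \in [:: (p, q); (i, j); (k, l)] ->
  False.
Proof.
case: x y => [x1 x2] [y1 y2] /= ik jl kp lq h1 h2.
by rewrite !inE => /or3P [] /eqP [e1 e2] /or3P [] /eqP [e3 e4]; lia.
Qed.

Lemma sw12 n (x y z : 'X_{1..n}) : (x + y + z)%MM = (y + x + z)%MM.
Proof. by apply/mnmP => t; rewrite !mnmDE; lia. Qed.

Lemma max_cond (x y z w : nat) :
  (maxn x y < maxn z w)%N = (((x < z)%N && (y < z)%N) || ((x < w)%N && (y < w)%N)).
Proof. by apply/idP/idP; lia. Qed.

Unset Implicit Arguments.

Theorem mainTheorem4 (K : fieldType) (P ord : seq pt) (i j k l p q : int) :
  P != [::] ->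
  is_Porder P ord ->
  i < k -> j < l -> k < p -> l < q ->
  inner_interval P (i, j) (k, l) ->
  inner_interval P (i, l) (p, q) ->
  ~~ mcoprime (lmon (fab K ord (i, j) (k, l))) (lmon (fab K ord (i, l) (p, q))) ->
  let a := (i, j) in let b := (k, l) in
  let alpha := (i, l) in let beta := (p, q) in
  let c := (i, l) in let d := (k, j) in
  let gamma := (i, q) in let delta := (p, l) in
  let h := (k, q) in let r := (p, j) in
  (reduces_to_zero P (spoly (fab K ord a b) (fab K ord alpha beta)) <->
   [\/ lexlt (mon3 ord d delta gamma) (mon3 ord beta a b) /\
         ((Plt ord h b && Plt ord delta b) || (Plt ord h beta && Plt ord delta beta)),
       [/\ lexlt (mon3 ord d delta gamma) (mon3 ord beta a b),
           inner_interval P d delta &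
           (Plt ord r a && Plt ord gamma a) || (Plt ord r beta && Plt ord gamma beta)],
       lexlt (mon3 ord beta a b) (mon3 ord d delta gamma) /\
         ((Plt ord h d && Plt ord a d) || (Plt ord h gamma && Plt ord a gamma)) |
       [/\ lexlt (mon3 ord beta a b) (mon3 ord d delta gamma),
           inner_interval P d delta &
           (Plt ord r d && Plt ord b d) || (Plt ord r delta && Plt ord b delta)]]).
Proof.
move=> _ [_ mord] ik jl kp lq Iab Icb ncop a b alpha beta c d gamma delta h r.
have Iah := inner_ah ik jl kp lq Iab Icb.
have IbB : inner_interval P b beta.
  by apply: (@inner_sub P (i, l) (p, q) b beta Icb); rewrite /= ; lia.
have vx : forall x : pt, x \in vertices P -> x \in ord by move=> x; rewrite mord.
have [va vb vc vd] := inner_corners Iab.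
have [_ vB vG vD] := inner_corners Icb.
have [_ vh _ _] := inner_corners Iah.
move/vx in va; move/vx in vb; move/vx in vc; move/vx in vd.
move/vx in vB; move/vx in vG; move/vx in vD; move/vx in vh.
rewrite /= in va vb vc vd vB vG vD vh.
subst a b alpha beta c d gamma delta h r.
have pn : forall x y : pt, x.1 != y.1 -> x != y by move=> [? ?] [? ?] /= ne; apply: contra ne => /eqP [-> _].
have pn2 : forall x y : pt, x.2 != y.2 -> x != y by move=> [? ?] [? ?] /= ne; apply: contra ne => /eqP [_ ->].
have nik : i != k by rewrite lt_eqF. have nip : i != p by rewrite lt_eqF // (lt_trans ik kp).
have nkp : k != p by rewrite lt_eqF. have njl : j != l by rewrite lt_eqF.
have njq : j != q by rewrite lt_eqF // (lt_trans jl lq). have nlq : l != q by rewrite lt_eqF.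
have [ia [ea ma]] := mvarP va.
have [ib [eb mb]] := mvarP vb.
have [ic [ec mc]] := mvarP vc.
have [id [ed md]] := mvarP vd.
have [iB [eB mB]] := mvarP vB.
have [iG [eG mG]] := mvarP vG.
have [iD [eD mD]] := mvarP vD.
have [ih [eh mh]] := mvarP vh.
have dist : forall (x y : pt) (ix iy : 'I_(size ord)), x \in ord ->
  val ix = index x ord -> val iy = index y ord -> x != y -> ix != iy.
  move=> x y ix iy xin ex ey nxy; rewrite -val_eqE ex ey; exact: index_neq.
have nab : ia != ib by apply: (dist (i, j) (k, l)) => //; first [by apply: pn; rewrite /= ?nik ?nip ?nkp ?(eq_sym k i) ?(eq_sym p i) ?(eq_sym p k) // | by apply: pn2; rewrite /= ?njl ?njq ?nlq ?(eq_sym l j) ?(eq_sym q j) ?(eq_sym q l) //].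
have nac : ia != ic by apply: (dist (i, j) (i, l)) => //; first [by apply: pn; rewrite /= ?nik ?nip ?nkp ?(eq_sym k i) ?(eq_sym p i) ?(eq_sym p k) // | by apply: pn2; rewrite /= ?njl ?njq ?nlq ?(eq_sym l j) ?(eq_sym q j) ?(eq_sym q l) //].
have nad : ia != id by apply: (dist (i, j) (k, j)) => //; first [by apply: pn; rewrite /= ?nik ?nip ?nkp ?(eq_sym k i) ?(eq_sym p i) ?(eq_sym p k) // | by apply: pn2; rewrite /= ?njl ?njq ?nlq ?(eq_sym l j) ?(eq_sym q j) ?(eq_sym q l) //].
have naB : ia != iB by apply: (dist (i, j) (p, q)) => //; first [by apply: pn; rewrite /= ?nik ?nip ?nkp ?(eq_sym k i) ?(eq_sym p i) ?(eq_sym p k) // | by apply: pn2; rewrite /= ?njl ?njq ?nlq ?(eq_sym l j) ?(eq_sym q j) ?(eq_sym q l) //].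
have naG : ia != iG by apply: (dist (i, j) (i, q)) => //; first [by apply: pn; rewrite /= ?nik ?nip ?nkp ?(eq_sym k i) ?(eq_sym p i) ?(eq_sym p k) // | by apply: pn2; rewrite /= ?njl ?njq ?nlq ?(eq_sym l j) ?(eq_sym q j) ?(eq_sym q l) //].
have naD : ia != iD by apply: (dist (i, j) (p, l)) => //; first [by apply: pn; rewrite /= ?nik ?nip ?nkp ?(eq_sym k i) ?(eq_sym p i) ?(eq_sym p k) // | by apply: pn2; rewrite /= ?njl ?njq ?nlq ?(eq_sym l j) ?(eq_sym q j) ?(eq_sym q l) //].
have nah : ia != ih by apply: (dist (i, j) (k, q)) => //; first [by apply: pn; rewrite /= ?nik ?nip ?nkp ?(eq_sym k i) ?(eq_sym p i) ?(eq_sym p k) // | by apply: pn2; rewrite /= ?njl ?njq ?nlq ?(eq_sym l j) ?(eq_sym q j) ?(eq_sym q l) //].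
have nba : ib != ia by apply: (dist (k, l) (i, j)) => //; first [by apply: pn; rewrite /= ?nik ?nip ?nkp ?(eq_sym k i) ?(eq_sym p i) ?(eq_sym p k) // | by apply: pn2; rewrite /= ?njl ?njq ?nlq ?(eq_sym l j) ?(eq_sym q j) ?(eq_sym q l) //].
have nbc : ib != ic by apply: (dist (k, l) (i, l)) => //; first [by apply: pn; rewrite /= ?nik ?nip ?nkp ?(eq_sym k i) ?(eq_sym p i) ?(eq_sym p k) // | by apply: pn2; rewrite /= ?njl ?njq ?nlq ?(eq_sym l j) ?(eq_sym q j) ?(eq_sym q l) //].
have nbd : ib != id by apply: (dist (k, l) (k, j)) => //; first [by apply: pn; rewrite /= ?nik ?nip ?nkp ?(eq_sym k i) ?(eq_sym p i) ?(eq_sym p k) // | by apply: pn2; rewrite /= ?njl ?njq ?nlq ?(eq_sym l j) ?(eq_sym q j) ?(eq_sym q l) //].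
have nbB : ib != iB by apply: (dist (k, l) (p, q)) => //; first [by apply: pn; rewrite /= ?nik ?nip ?nkp ?(eq_sym k i) ?(eq_sym p i) ?(eq_sym p k) // | by apply: pn2; rewrite /= ?njl ?njq ?nlq ?(eq_sym l j) ?(eq_sym q j) ?(eq_sym q l) //].
have nbG : ib != iG by apply: (dist (k, l) (i, q)) => //; first [by apply: pn; rewrite /= ?nik ?nip ?nkp ?(eq_sym k i) ?(eq_sym p i) ?(eq_sym p k) // | by apply: pn2; rewrite /= ?njl ?njq ?nlq ?(eq_sym l j) ?(eq_sym q j) ?(eq_sym q l) //].
have nbD : ib != iD by apply: (dist (k, l) (p, l)) => //; first [by apply: pn; rewrite /= ?nik ?nip ?nkp ?(eq_sym k i) ?(eq_sym p i) ?(eq_sym p k) // | by apply: pn2; rewrite /= ?njl ?njq ?nlq ?(eq_sym l j) ?(eq_sym q j) ?(eq_sym q l) //].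
have nbh : ib != ih by apply: (dist (k, l) (k, q)) => //; first [by apply: pn; rewrite /= ?nik ?nip ?nkp ?(eq_sym k i) ?(eq_sym p i) ?(eq_sym p k) // | by apply: pn2; rewrite /= ?njl ?njq ?nlq ?(eq_sym l j) ?(eq_sym q j) ?(eq_sym q l) //].
have nca : ic != ia by apply: (dist (i, l) (i, j)) => //; first [by apply: pn; rewrite /= ?nik ?nip ?nkp ?(eq_sym k i) ?(eq_sym p i) ?(eq_sym p k) // | by apply: pn2; rewrite /= ?njl ?njq ?nlq ?(eq_sym l j) ?(eq_sym q j) ?(eq_sym q l) //].
have ncb : ic != ib by apply: (dist (i, l) (k, l)) => //; first [by apply: pn; rewrite /= ?nik ?nip ?nkp ?(eq_sym k i) ?(eq_sym p i) ?(eq_sym p k) // | by apply: pn2; rewrite /= ?njl ?njq ?nlq ?(eq_sym l j) ?(eq_sym q j) ?(eq_sym q l) //].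
have ncd : ic != id by apply: (dist (i, l) (k, j)) => //; first [by apply: pn; rewrite /= ?nik ?nip ?nkp ?(eq_sym k i) ?(eq_sym p i) ?(eq_sym p k) // | by apply: pn2; rewrite /= ?njl ?njq ?nlq ?(eq_sym l j) ?(eq_sym q j) ?(eq_sym q l) //].
have ncB : ic != iB by apply: (dist (i, l) (p, q)) => //; first [by apply: pn; rewrite /= ?nik ?nip ?nkp ?(eq_sym k i) ?(eq_sym p i) ?(eq_sym p k) // | by apply: pn2; rewrite /= ?njl ?njq ?nlq ?(eq_sym l j) ?(eq_sym q j) ?(eq_sym q l) //].
have ncG : ic != iG by apply: (dist (i, l) (i, q)) => //; first [by apply: pn; rewrite /= ?nik ?nip ?nkp ?(eq_sym k i) ?(eq_sym p i) ?(eq_sym p k) // | by apply: pn2; rewrite /= ?njl ?njq ?nlq ?(eq_sym l j) ?(eq_sym q j) ?(eq_sym q l) //].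
have ncD : ic != iD by apply: (dist (i, l) (p, l)) => //; first [by apply: pn; rewrite /= ?nik ?nip ?nkp ?(eq_sym k i) ?(eq_sym p i) ?(eq_sym p k) // | by apply: pn2; rewrite /= ?njl ?njq ?nlq ?(eq_sym l j) ?(eq_sym q j) ?(eq_sym q l) //].
have nch : ic != ih by apply: (dist (i, l) (k, q)) => //; first [by apply: pn; rewrite /= ?nik ?nip ?nkp ?(eq_sym k i) ?(eq_sym p i) ?(eq_sym p k) // | by apply: pn2; rewrite /= ?njl ?njq ?nlq ?(eq_sym l j) ?(eq_sym q j) ?(eq_sym q l) //].
have nda : id != ia by apply: (dist (k, j) (i, j)) => //; first [by apply: pn; rewrite /= ?nik ?nip ?nkp ?(eq_sym k i) ?(eq_sym p i) ?(eq_sym p k) // | by apply: pn2; rewrite /= ?njl ?njq ?nlq ?(eq_sym l j) ?(eq_sym q j) ?(eq_sym q l) //].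
have ndb : id != ib by apply: (dist (k, j) (k, l)) => //; first [by apply: pn; rewrite /= ?nik ?nip ?nkp ?(eq_sym k i) ?(eq_sym p i) ?(eq_sym p k) // | by apply: pn2; rewrite /= ?njl ?njq ?nlq ?(eq_sym l j) ?(eq_sym q j) ?(eq_sym q l) //].
have ndc : id != ic by apply: (dist (k, j) (i, l)) => //; first [by apply: pn; rewrite /= ?nik ?nip ?nkp ?(eq_sym k i) ?(eq_sym p i) ?(eq_sym p k) // | by apply: pn2; rewrite /= ?njl ?njq ?nlq ?(eq_sym l j) ?(eq_sym q j) ?(eq_sym q l) //].
have ndB : id != iB by apply: (dist (k, j) (p, q)) => //; first [by apply: pn; rewrite /= ?nik ?nip ?nkp ?(eq_sym k i) ?(eq_sym p i) ?(eq_sym p k) // | by apply: pn2; rewrite /= ?njl ?njq ?nlq ?(eq_sym l j) ?(eq_sym q j) ?(eq_sym q l) //].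
have ndG : id != iG by apply: (dist (k, j) (i, q)) => //; first [by apply: pn; rewrite /= ?nik ?nip ?nkp ?(eq_sym k i) ?(eq_sym p i) ?(eq_sym p k) // | by apply: pn2; rewrite /= ?njl ?njq ?nlq ?(eq_sym l j) ?(eq_sym q j) ?(eq_sym q l) //].
have ndD : id != iD by apply: (dist (k, j) (p, l)) => //; first [by apply: pn; rewrite /= ?nik ?nip ?nkp ?(eq_sym k i) ?(eq_sym p i) ?(eq_sym p k) // | by apply: pn2; rewrite /= ?njl ?njq ?nlq ?(eq_sym l j) ?(eq_sym q j) ?(eq_sym q l) //].
have ndh : id != ih by apply: (dist (k, j) (k, q)) => //; first [by apply: pn; rewrite /= ?nik ?nip ?nkp ?(eq_sym k i) ?(eq_sym p i) ?(eq_sym p k) // | by apply: pn2; rewrite /= ?njl ?njq ?nlq ?(eq_sym l j) ?(eq_sym q j) ?(eq_sym q l) //].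
have nBa : iB != ia by apply: (dist (p, q) (i, j)) => //; first [by apply: pn; rewrite /= ?nik ?nip ?nkp ?(eq_sym k i) ?(eq_sym p i) ?(eq_sym p k) // | by apply: pn2; rewrite /= ?njl ?njq ?nlq ?(eq_sym l j) ?(eq_sym q j) ?(eq_sym q l) //].
have nBb : iB != ib by apply: (dist (p, q) (k, l)) => //; first [by apply: pn; rewrite /= ?nik ?nip ?nkp ?(eq_sym k i) ?(eq_sym p i) ?(eq_sym p k) // | by apply: pn2; rewrite /= ?njl ?njq ?nlq ?(eq_sym l j) ?(eq_sym q j) ?(eq_sym q l) //].
have nBc : iB != ic by apply: (dist (p, q) (i, l)) => //; first [by apply: pn; rewrite /= ?nik ?nip ?nkp ?(eq_sym k i) ?(eq_sym p i) ?(eq_sym p k) // | by apply: pn2; rewrite /= ?njl ?njq ?nlq ?(eq_sym l j) ?(eq_sym q j) ?(eq_sym q l) //].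
have nBd : iB != id by apply: (dist (p, q) (k, j)) => //; first [by apply: pn; rewrite /= ?nik ?nip ?nkp ?(eq_sym k i) ?(eq_sym p i) ?(eq_sym p k) // | by apply: pn2; rewrite /= ?njl ?njq ?nlq ?(eq_sym l j) ?(eq_sym q j) ?(eq_sym q l) //].
have nBG : iB != iG by apply: (dist (p, q) (i, q)) => //; first [by apply: pn; rewrite /= ?nik ?nip ?nkp ?(eq_sym k i) ?(eq_sym p i) ?(eq_sym p k) // | by apply: pn2; rewrite /= ?njl ?njq ?nlq ?(eq_sym l j) ?(eq_sym q j) ?(eq_sym q l) //].
have nBD : iB != iD by apply: (dist (p, q) (p, l)) => //; first [by apply: pn; rewrite /= ?nik ?nip ?nkp ?(eq_sym k i) ?(eq_sym p i) ?(eq_sym p k) // | by apply: pn2; rewrite /= ?njl ?njq ?nlq ?(eq_sym l j) ?(eq_sym q j) ?(eq_sym q l) //].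
have nBh : iB != ih by apply: (dist (p, q) (k, q)) => //; first [by apply: pn; rewrite /= ?nik ?nip ?nkp ?(eq_sym k i) ?(eq_sym p i) ?(eq_sym p k) // | by apply: pn2; rewrite /= ?njl ?njq ?nlq ?(eq_sym l j) ?(eq_sym q j) ?(eq_sym q l) //].
have nGa : iG != ia by apply: (dist (i, q) (i, j)) => //; first [by apply: pn; rewrite /= ?nik ?nip ?nkp ?(eq_sym k i) ?(eq_sym p i) ?(eq_sym p k) // | by apply: pn2; rewrite /= ?njl ?njq ?nlq ?(eq_sym l j) ?(eq_sym q j) ?(eq_sym q l) //].
have nGb : iG != ib by apply: (dist (i, q) (k, l)) => //; first [by apply: pn; rewrite /= ?nik ?nip ?nkp ?(eq_sym k i) ?(eq_sym p i) ?(eq_sym p k) // | by apply: pn2; rewrite /= ?njl ?njq ?nlq ?(eq_sym l j) ?(eq_sym q j) ?(eq_sym q l) //].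
have nGc : iG != ic by apply: (dist (i, q) (i, l)) => //; first [by apply: pn; rewrite /= ?nik ?nip ?nkp ?(eq_sym k i) ?(eq_sym p i) ?(eq_sym p k) // | by apply: pn2; rewrite /= ?njl ?njq ?nlq ?(eq_sym l j) ?(eq_sym q j) ?(eq_sym q l) //].
have nGd : iG != id by apply: (dist (i, q) (k, j)) => //; first [by apply: pn; rewrite /= ?nik ?nip ?nkp ?(eq_sym k i) ?(eq_sym p i) ?(eq_sym p k) // | by apply: pn2; rewrite /= ?njl ?njq ?nlq ?(eq_sym l j) ?(eq_sym q j) ?(eq_sym q l) //].
have nGB : iG != iB by apply: (dist (i, q) (p, q)) => //; first [by apply: pn; rewrite /= ?nik ?nip ?nkp ?(eq_sym k i) ?(eq_sym p i) ?(eq_sym p k) // | by apply: pn2; rewrite /= ?njl ?njq ?nlq ?(eq_sym l j) ?(eq_sym q j) ?(eq_sym q l) //].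
have nGD : iG != iD by apply: (dist (i, q) (p, l)) => //; first [by apply: pn; rewrite /= ?nik ?nip ?nkp ?(eq_sym k i) ?(eq_sym p i) ?(eq_sym p k) // | by apply: pn2; rewrite /= ?njl ?njq ?nlq ?(eq_sym l j) ?(eq_sym q j) ?(eq_sym q l) //].
have nGh : iG != ih by apply: (dist (i, q) (k, q)) => //; first [by apply: pn; rewrite /= ?nik ?nip ?nkp ?(eq_sym k i) ?(eq_sym p i) ?(eq_sym p k) // | by apply: pn2; rewrite /= ?njl ?njq ?nlq ?(eq_sym l j) ?(eq_sym q j) ?(eq_sym q l) //].
have nDa : iD != ia by apply: (dist (p, l) (i, j)) => //; first [by apply: pn; rewrite /= ?nik ?nip ?nkp ?(eq_sym k i) ?(eq_sym p i) ?(eq_sym p k) // | by apply: pn2; rewrite /= ?njl ?njq ?nlq ?(eq_sym l j) ?(eq_sym q j) ?(eq_sym q l) //].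
have nDb : iD != ib by apply: (dist (p, l) (k, l)) => //; first [by apply: pn; rewrite /= ?nik ?nip ?nkp ?(eq_sym k i) ?(eq_sym p i) ?(eq_sym p k) // | by apply: pn2; rewrite /= ?njl ?njq ?nlq ?(eq_sym l j) ?(eq_sym q j) ?(eq_sym q l) //].
have nDc : iD != ic by apply: (dist (p, l) (i, l)) => //; first [by apply: pn; rewrite /= ?nik ?nip ?nkp ?(eq_sym k i) ?(eq_sym p i) ?(eq_sym p k) // | by apply: pn2; rewrite /= ?njl ?njq ?nlq ?(eq_sym l j) ?(eq_sym q j) ?(eq_sym q l) //].
have nDd : iD != id by apply: (dist (p, l) (k, j)) => //; first [by apply: pn; rewrite /= ?nik ?nip ?nkp ?(eq_sym k i) ?(eq_sym p i) ?(eq_sym p k) // | by apply: pn2; rewrite /= ?njl ?njq ?nlq ?(eq_sym l j) ?(eq_sym q j) ?(eq_sym q l) //].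
have nDB : iD != iB by apply: (dist (p, l) (p, q)) => //; first [by apply: pn; rewrite /= ?nik ?nip ?nkp ?(eq_sym k i) ?(eq_sym p i) ?(eq_sym p k) // | by apply: pn2; rewrite /= ?njl ?njq ?nlq ?(eq_sym l j) ?(eq_sym q j) ?(eq_sym q l) //].
have nDG : iD != iG by apply: (dist (p, l) (i, q)) => //; first [by apply: pn; rewrite /= ?nik ?nip ?nkp ?(eq_sym k i) ?(eq_sym p i) ?(eq_sym p k) // | by apply: pn2; rewrite /= ?njl ?njq ?nlq ?(eq_sym l j) ?(eq_sym q j) ?(eq_sym q l) //].
have nDh : iD != ih by apply: (dist (p, l) (k, q)) => //; first [by apply: pn; rewrite /= ?nik ?nip ?nkp ?(eq_sym k i) ?(eq_sym p i) ?(eq_sym p k) // | by apply: pn2; rewrite /= ?njl ?njq ?nlq ?(eq_sym l j) ?(eq_sym q j) ?(eq_sym q l) //].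
have nha : ih != ia by apply: (dist (k, q) (i, j)) => //; first [by apply: pn; rewrite /= ?nik ?nip ?nkp ?(eq_sym k i) ?(eq_sym p i) ?(eq_sym p k) // | by apply: pn2; rewrite /= ?njl ?njq ?nlq ?(eq_sym l j) ?(eq_sym q j) ?(eq_sym q l) //].
have nhb : ih != ib by apply: (dist (k, q) (k, l)) => //; first [by apply: pn; rewrite /= ?nik ?nip ?nkp ?(eq_sym k i) ?(eq_sym p i) ?(eq_sym p k) // | by apply: pn2; rewrite /= ?njl ?njq ?nlq ?(eq_sym l j) ?(eq_sym q j) ?(eq_sym q l) //].
have nhc : ih != ic by apply: (dist (k, q) (i, l)) => //; first [by apply: pn; rewrite /= ?nik ?nip ?nkp ?(eq_sym k i) ?(eq_sym p i) ?(eq_sym p k) // | by apply: pn2; rewrite /= ?njl ?njq ?nlq ?(eq_sym l j) ?(eq_sym q j) ?(eq_sym q l) //].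
have nhd : ih != id by apply: (dist (k, q) (k, j)) => //; first [by apply: pn; rewrite /= ?nik ?nip ?nkp ?(eq_sym k i) ?(eq_sym p i) ?(eq_sym p k) // | by apply: pn2; rewrite /= ?njl ?njq ?nlq ?(eq_sym l j) ?(eq_sym q j) ?(eq_sym q l) //].
have nhB : ih != iB by apply: (dist (k, q) (p, q)) => //; first [by apply: pn; rewrite /= ?nik ?nip ?nkp ?(eq_sym k i) ?(eq_sym p i) ?(eq_sym p k) // | by apply: pn2; rewrite /= ?njl ?njq ?nlq ?(eq_sym l j) ?(eq_sym q j) ?(eq_sym q l) //].
have nhG : ih != iG by apply: (dist (k, q) (i, q)) => //; first [by apply: pn; rewrite /= ?nik ?nip ?nkp ?(eq_sym k i) ?(eq_sym p i) ?(eq_sym p k) // | by apply: pn2; rewrite /= ?njl ?njq ?nlq ?(eq_sym l j) ?(eq_sym q j) ?(eq_sym q l) //].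
have nhD : ih != iD by apply: (dist (k, q) (p, l)) => //; first [by apply: pn; rewrite /= ?nik ?nip ?nkp ?(eq_sym k i) ?(eq_sym p i) ?(eq_sym p k) // | by apply: pn2; rewrite /= ?njl ?njq ?nlq ?(eq_sym l j) ?(eq_sym q j) ?(eq_sym q l) //].
rewrite /fab /xv /= in ncop *.
rewrite ma mb mc md mB mG mD -!mpolyXD in ncop *.
rewrite (lmon_binom' _ (quad_neq _ nac nad)) (lmon_binom' _ (quad_neq _ ncG ncD)) in ncop.
have hf : lexlt (U_(ia) + U_(ib))%MM (U_(ic) + U_(id))%MM.
  move: ncop; case: ifP => // _; case: ifP => _; rewrite mcoprime_quad //.
have hg : ~~ lexlt (U_(ic) + U_(iB))%MM (U_(iG) + U_(iD))%MM.
  move: ncop; rewrite hf; case: ifP => // _; rewrite mcoprime_quad //.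
have [Lm Sf Sg] := mlcm_tri ncd ncB ndB.
rewrite /spoly /lcoef (lmon_binom' _ (quad_neq _ nac nad)) (lmon_binom' _ (quad_neq _ ncG ncD)) hf (negbTE hg).
rewrite Lm Sf Sg !mcoeffB !mcoeffX eqxx (negbTE (quad_neq _ nac nad)) (negbTE (quad_neq _ nGc nGB)).
rewrite /= ?eqxx ?sub0r ?subr0 ?invrN1 ?invr1 ?scaleN1r ?scale1r.
set M1 := mon3 ord (p, q) (i, j) (k, l).
set M5 := mon3 ord (k, j) (p, l) (i, q).
have eM1 : M1 = (U_(iB) + U_(ia) + U_(ib))%MM by rewrite /M1 /mon3 mB ma mb.
have eM5 : M5 = (U_(id) + U_(iD) + U_(iG))%MM by rewrite /M5 /mon3 md mD mG.
have -> : - ('X_[U_(iB)] * ('X_[U_(ia) + U_(ib)] - 'X_[U_(ic) + U_(id)])) -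
   'X_[U_(id)] * ('X_[U_(ic) + U_(iB)] - 'X_[U_(iG) + U_(iD)]) = 'X_[M5] - 'X_[M1] :> {mpoly K[size ord]}.
  by rewrite eM1 eM5 !mpolyXD; ring.

have n51 : M5 != M1 by rewrite eM5 eM1 tri_neq.
set L := if lexlt M5 M1 then M1 else M5.
have lS : lmon ('X_[M5] - 'X_[M1] : {mpoly K[size ord]}) = L by rewrite lmon_binom'.
have hM1L : lexle M1 L.
  by rewrite /L; case: ifP => hx; [exact: lexle_refl | rewrite lexleNgt hx].
have hM5L : lexle M5 L.
  by rewrite /L; case: ifP => hx; [rewrite /lexle hx orbT | exact: lexle_refl].
set M2 := (U_(ia) + U_(ih) + U_(iD))%MM.
have HB : lexlt M2 L -> reduces_to_zero P ('X_[M5] - 'X_[M1] : {mpoly K[size ord]}).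
  move=> h2.
  exists [:: (- 'X_[U_(ia)], fab K ord (k, l) (p, q)); (- 'X_[U_(iD)], fab K ord (i, j) (k, q))]; split.
  - move=> ug; rewrite !inE => /orP [] /eqP -> /=.
      by exists (k, l), (p, q).
    by exists (i, j), (k, q).
  - by rewrite !big_cons big_nil /fab /xv /= mb mB mh mD ma mG md eM1 eM5 !mpolyXD addr0; ring.
  - move=> ug; rewrite lS !inE => /orP [] /eqP -> /= _.
      have -> : - 'X_[U_(ia)] * fab K ord (k, l) (p, q) = (-1) *: ('X_[M1] - 'X_[M2]).
        by rewrite scaleN1r /fab /xv /= mb mB mh mD eM1 /M2 !mpolyXD; ring.
      apply: lmon_binom_le; [by rewrite oppr_eq0 oner_eq0 | by rewrite eM1 /M2 tri_neq
        | exact: hM1L | by rewrite /lexle h2 orbT].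
    have -> : - 'X_[U_(iD)] * fab K ord (i, j) (k, q) = (-1) *: ('X_[M2] - 'X_[M5]).
      by rewrite scaleN1r /fab /xv /= ma mh mG md eM5 /M2 !mpolyXD; ring.
    apply: lmon_binom_le; [by rewrite oppr_eq0 oner_eq0 | by rewrite eM5 /M2 eq_sym tri_neq
        | by rewrite /lexle h2 orbT | exact: hM5L].

have Rr : inner_interval P (k, j) (p, l) -> exists ir : 'I_(size ord),
    [/\ (p, j) \in ord, val ir = index (p, j) ord & mvar ord (p, j) = U_(ir)%MM].
  move=> dd; have [_ _ _ vr] := inner_corners (inner_aB ik jl kp lq Iab Icb dd).
  move/vx in vr; have [ir [er mr]] := mvarP vr; by exists ir.
set M6 := (U_(ib) + U_(iG) + mvar ord (p, j))%MM.
have HC : inner_interval P (k, j) (p, l) -> lexlt M6 L ->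
    reduces_to_zero P ('X_[M5] - 'X_[M1] : {mpoly K[size ord]}).
  move=> dd h6; have IaB := inner_aB ik jl kp lq Iab Icb dd.
  have [ir [vr er mr]] := Rr dd.
  have nra : ir != ia by apply: (dist (p, j) (i, j)) => //; first [by apply: pn; rewrite /= ?nik ?nip ?nkp ?(eq_sym k i) ?(eq_sym p i) ?(eq_sym p k) // | by apply: pn2; rewrite /= ?njl ?njq ?nlq ?(eq_sym l j) ?(eq_sym q j) ?(eq_sym q l) //].
  have nar : ia != ir by rewrite eq_sym.
  have nrb : ir != ib by apply: (dist (p, j) (k, l)) => //; first [by apply: pn; rewrite /= ?nik ?nip ?nkp ?(eq_sym k i) ?(eq_sym p i) ?(eq_sym p k) // | by apply: pn2; rewrite /= ?njl ?njq ?nlq ?(eq_sym l j) ?(eq_sym q j) ?(eq_sym q l) //].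
  have nbr : ib != ir by rewrite eq_sym.
  have nrc : ir != ic by apply: (dist (p, j) (i, l)) => //; first [by apply: pn; rewrite /= ?nik ?nip ?nkp ?(eq_sym k i) ?(eq_sym p i) ?(eq_sym p k) // | by apply: pn2; rewrite /= ?njl ?njq ?nlq ?(eq_sym l j) ?(eq_sym q j) ?(eq_sym q l) //].
  have ncr : ic != ir by rewrite eq_sym.
  have nrd : ir != id by apply: (dist (p, j) (k, j)) => //; first [by apply: pn; rewrite /= ?nik ?nip ?nkp ?(eq_sym k i) ?(eq_sym p i) ?(eq_sym p k) // | by apply: pn2; rewrite /= ?njl ?njq ?nlq ?(eq_sym l j) ?(eq_sym q j) ?(eq_sym q l) //].
  have ndr : id != ir by rewrite eq_sym.
  have nrB : ir != iB by apply: (dist (p, j) (p, q)) => //; first [by apply: pn; rewrite /= ?nik ?nip ?nkp ?(eq_sym k i) ?(eq_sym p i) ?(eq_sym p k) // | by apply: pn2; rewrite /= ?njl ?njq ?nlq ?(eq_sym l j) ?(eq_sym q j) ?(eq_sym q l) //].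
  have nBr : iB != ir by rewrite eq_sym.
  have nrG : ir != iG by apply: (dist (p, j) (i, q)) => //; first [by apply: pn; rewrite /= ?nik ?nip ?nkp ?(eq_sym k i) ?(eq_sym p i) ?(eq_sym p k) // | by apply: pn2; rewrite /= ?njl ?njq ?nlq ?(eq_sym l j) ?(eq_sym q j) ?(eq_sym q l) //].
  have nGr : iG != ir by rewrite eq_sym.
  have nrD : ir != iD by apply: (dist (p, j) (p, l)) => //; first [by apply: pn; rewrite /= ?nik ?nip ?nkp ?(eq_sym k i) ?(eq_sym p i) ?(eq_sym p k) // | by apply: pn2; rewrite /= ?njl ?njq ?nlq ?(eq_sym l j) ?(eq_sym q j) ?(eq_sym q l) //].
  have nDr : iD != ir by rewrite eq_sym.
  have nrh : ir != ih by apply: (dist (p, j) (k, q)) => //; first [by apply: pn; rewrite /= ?nik ?nip ?nkp ?(eq_sym k i) ?(eq_sym p i) ?(eq_sym p k) // | by apply: pn2; rewrite /= ?njl ?njq ?nlq ?(eq_sym l j) ?(eq_sym q j) ?(eq_sym q l) //].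
  have nhr : ih != ir by rewrite eq_sym.
  have eM6 : M6 = (U_(ib) + U_(iG) + U_(ir))%MM by rewrite /M6 mr.
  exists [:: (- 'X_[U_(ib)], fab K ord (i, j) (p, q)); ('X_[U_(iG)], fab K ord (k, j) (p, l))]; split.
  - move=> ug; rewrite !inE => /orP [] /eqP -> /=.
      by exists (i, j), (p, q).
    by exists (k, j), (p, l).
  - by rewrite !big_cons big_nil /fab /xv /= mb mB ma mG md mD mr eM1 eM5 !mpolyXD addr0; ring.
  - move=> ug; rewrite lS !inE => /orP [] /eqP -> /= _.
      have -> : - 'X_[U_(ib)] * fab K ord (i, j) (p, q) = (-1) *: ('X_[M1] - 'X_[M6]).
        by rewrite scaleN1r /fab /xv /= ma mB mG mr eM1 eM6 !mpolyXD; ring.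
      apply: lmon_binom_le; [by rewrite oppr_eq0 oner_eq0 | by rewrite eM1 eM6 tri_neq
        | exact: hM1L | by rewrite /lexle h6 orbT].
    have -> : 'X_[U_(iG)] * fab K ord (k, j) (p, l) = 1 *: ('X_[M5] - 'X_[M6]).
      by rewrite scale1r /fab /xv /= md mD mb mr eM5 eM6 !mpolyXD; ring.
    apply: lmon_binom_le; [by rewrite oner_eq0 | by rewrite eM5 eM6 tri_neq
        | exact: hM5L | by rewrite /lexle h6 orbT].

have toPt : forall (x : pt) (ix : 'I_(size ord)), x \in ord -> val ix = index x ord ->
    (ix == iB) || (ix == ia) || (ix == ib) -> x \in [:: (p, q); (i, j); (k, l)].
  move=> x ix xin ex; rewrite !inE -!val_eqE /= ex eB ea eb.
  have idx : forall y, y \in ord -> (index x ord == index y ord) -> x == y.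
    move=> y yin; apply: contraTT => nxy; exact: index_neq.
  by move=> /orP [/orP [/(idx _ vB)|/(idx _ va)]|/(idx _ vb)] /eqP ->; rewrite ?eqxx ?orbT.
have HA : reduces_to_zero P ('X_[M5] - 'X_[M1] : {mpoly K[size ord]}) ->
    lexlt M2 L \/ (inner_interval P (k, j) (p, l) /\ lexle M6 L).
  move=> [s [sG sE sL]].
  case: (boolP (lexlt M2 L)) => h2; [by left | right].
  have c1 : ('X_[M5] - 'X_[M1] : {mpoly K[size ord]})@_M1 = -1.
    by rewrite mcoeffB !mcoeffX eqxx (negbTE n51) sub0r.
  case: (boolP (has (fun ug => (ug.1 * ug.2)@_M1 != 0) s)) => [/hasP [ug ugs nz]|/hasPn hn]; last first.
    exfalso; move: c1; rewrite sE raddf_sum big_seq big1 => [|x xs]; last first.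
      by move/negPn: (hn x xs) => /eqP.
    by move/eqP; rewrite eq_sym oppr_eq0 oner_eq0.
  have nzug : ug.1 * ug.2 != 0 by apply: contraNneq nz => ->; rewrite mcoeff0.
  have hL := sL ug ugs nzug; rewrite lS in hL.
  have [a' [b' [Iab' eg]]] := sG ug ugs.
  have [va' vb' vs vt] := inner_corners Iab'.
  move/vx in va'; move/vx in vb'; move/vx in vs; move/vx in vt.
  have [ia' [ea' ma']] := mvarP va'.
  have [ib' [eb' mb']] := mvarP vb'.
  have [is' [es' ms']] := mvarP vs.
  have [it' [et' mt']] := mvarP vt.
  have [lt1 [lt2 _]] := Iab'.
  have nas : ia' != is' by apply: (dist a' (a'.1, b'.2)) => //; apply: pn2; rewrite /= lt_eqF.
  have nat : ia' != it' by apply: (dist a' (b'.1, a'.2)) => //; apply: pn; rewrite /= lt_eqF.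
  rewrite eg /fab /xv -!mpolyXD in nz hL.
  have neq : (mvar ord a' + mvar ord b')%MM != (mvar ord (a'.1, b'.2) + mvar ord (b'.1, a'.2))%MM.
    by rewrite ma' mb' ms' mt' quad_neq.
  have [mu [hE [h1 h3]]] := key neq nz hL.
  case: hE => hE; last first.
    exfalso; have := hE; rewrite ms' mt' eM1 => /mem3 [m1' m2'].
    exact: (grid_anti ik jl kp lq lt1 lt2 (toPt _ _ vs es' m1') (toPt _ _ vt et' m2')).
  have := hE; rewrite ma' mb' eM1 => /mem3 [m1' m2'].
  have := grid_cases ik jl kp lq lt1 lt2 (toPt _ _ va' ea' m1') (toPt _ _ vb' eb' m2').
  case=> [[? ?]|[? ?]|[? ?]]; subst a' b'; rewrite /= in h3.
  - exfalso; rewrite ma mb eM1 rot3 in hE; move/cancel3: hE => hmu.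
    rewrite hmu mc md in h3.
    have lt1' : lexlt M1 (U_(iB) + (U_(ic) + U_(id)))%MM by rewrite eM1 -addmA lexlt_addl.
    have lt5' : lexlt M5 (U_(iB) + (U_(ic) + U_(id)))%MM.
      have e5 : M5 = (U_(iG) + U_(iD) + U_(id))%MM by rewrite eM5 rot3 sw12.
      have e3 : (U_(iB) + (U_(ic) + U_(id)))%MM = (U_(ic) + U_(iB) + U_(id))%MM.
        by rewrite addmA sw12.
      rewrite e5 e3 lexlt_addr.
      have := lexlt_total (quad_neq iD nGc nGB); by rewrite (negbTE hg) orbF.
    by move: h3; rewrite /L; case: ifP => _; rewrite lexleNgt ?lt1' ?lt5'.
  - rewrite ma mB eM1 sw12 in hE; move/cancel3: hE => hmu.
    rewrite hmu mG in h3; split; last by rewrite /M6 -addmA.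
    by apply: (@inner_sub P (i, j) (p, q) (k, j) (p, l) Iab'); rewrite /= ?lexx ?(ltW ik) ?(ltW lq).
  - exfalso; rewrite mb mB eM1 rot3 rot3 in hE; move/cancel3: hE => hmu.
    rewrite hmu mh mD addmA -/M2 /lexle (negbTE h2) orbF in h3.
    move: h3; rewrite /L; case: ifP => _ /eqP e.
      by move: e; apply/eqP; rewrite eq_sym eM1 /M2 tri_neq.
    by move: e; apply/eqP; rewrite eM5 /M2 tri_neq.

have hX : lexlt M1 M5 = ~~ lexlt M5 M1.
  have := lexlt_total n51; case h5: (lexlt M5 M1) => /=; last by move=> ->.
  by move=> _; apply/negbTE/lexlt_asym.
have c21 : lexlt M2 M1 = ((val ih < val ib)%N && (val iD < val ib)%N) || ((val ih < val iB)%N && (val iD < val iB)%N).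
  by rewrite /M2 eM1 [X in lexlt X _]rot3 [X in lexlt _ X]rot3 [X in lexlt _ X]rot3 lexlt_tri // max_cond.
have c25 : lexlt M2 M5 = ((val ih < val id)%N && (val ia < val id)%N) || ((val ih < val iG)%N && (val ia < val iG)%N).
  by rewrite /M2 eM5 [X in lexlt X _]sw12 [X in lexlt _ X]sw3 lexlt_tri // max_cond.
have R6 : inner_interval P (k, j) (p, l) -> exists ir : 'I_(size ord),
   [/\ val ir = index (p, j) ord, M6 = (U_(ib) + U_(iG) + U_(ir))%MM,
     lexlt M6 M1 = ((val ir < val ia)%N && (val iG < val ia)%N) || ((val ir < val iB)%N && (val iG < val iB)%N),
     lexlt M6 M5 = ((val ir < val id)%N && (val ib < val id)%N) || ((val ir < val iD)%N && (val ib < val iD)%N) &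
     M6 != M1 /\ M6 != M5].
  move=> dd; have [ir [vr er mr]] := Rr dd.
  have nra : ir != ia by apply: (dist (p, j) (i, j)) => //; first [by apply: pn; rewrite /= ?nik ?nip ?nkp ?(eq_sym k i) ?(eq_sym p i) ?(eq_sym p k) // | by apply: pn2; rewrite /= ?njl ?njq ?nlq ?(eq_sym l j) ?(eq_sym q j) ?(eq_sym q l) //].
  have nar : ia != ir by rewrite eq_sym.
  have nrb : ir != ib by apply: (dist (p, j) (k, l)) => //; first [by apply: pn; rewrite /= ?nik ?nip ?nkp ?(eq_sym k i) ?(eq_sym p i) ?(eq_sym p k) // | by apply: pn2; rewrite /= ?njl ?njq ?nlq ?(eq_sym l j) ?(eq_sym q j) ?(eq_sym q l) //].
  have nbr : ib != ir by rewrite eq_sym.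
  have nrc : ir != ic by apply: (dist (p, j) (i, l)) => //; first [by apply: pn; rewrite /= ?nik ?nip ?nkp ?(eq_sym k i) ?(eq_sym p i) ?(eq_sym p k) // | by apply: pn2; rewrite /= ?njl ?njq ?nlq ?(eq_sym l j) ?(eq_sym q j) ?(eq_sym q l) //].
  have ncr : ic != ir by rewrite eq_sym.
  have nrd : ir != id by apply: (dist (p, j) (k, j)) => //; first [by apply: pn; rewrite /= ?nik ?nip ?nkp ?(eq_sym k i) ?(eq_sym p i) ?(eq_sym p k) // | by apply: pn2; rewrite /= ?njl ?njq ?nlq ?(eq_sym l j) ?(eq_sym q j) ?(eq_sym q l) //].
  have ndr : id != ir by rewrite eq_sym.
  have nrB : ir != iB by apply: (dist (p, j) (p, q)) => //; first [by apply: pn; rewrite /= ?nik ?nip ?nkp ?(eq_sym k i) ?(eq_sym p i) ?(eq_sym p k) // | by apply: pn2; rewrite /= ?njl ?njq ?nlq ?(eq_sym l j) ?(eq_sym q j) ?(eq_sym q l) //].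
  have nBr : iB != ir by rewrite eq_sym.
  have nrG : ir != iG by apply: (dist (p, j) (i, q)) => //; first [by apply: pn; rewrite /= ?nik ?nip ?nkp ?(eq_sym k i) ?(eq_sym p i) ?(eq_sym p k) // | by apply: pn2; rewrite /= ?njl ?njq ?nlq ?(eq_sym l j) ?(eq_sym q j) ?(eq_sym q l) //].
  have nGr : iG != ir by rewrite eq_sym.
  have nrD : ir != iD by apply: (dist (p, j) (p, l)) => //; first [by apply: pn; rewrite /= ?nik ?nip ?nkp ?(eq_sym k i) ?(eq_sym p i) ?(eq_sym p k) // | by apply: pn2; rewrite /= ?njl ?njq ?nlq ?(eq_sym l j) ?(eq_sym q j) ?(eq_sym q l) //].
  have nDr : iD != ir by rewrite eq_sym.
  have nrh : ir != ih by apply: (dist (p, j) (k, q)) => //; first [by apply: pn; rewrite /= ?nik ?nip ?nkp ?(eq_sym k i) ?(eq_sym p i) ?(eq_sym p k) // | by apply: pn2; rewrite /= ?njl ?njq ?nlq ?(eq_sym l j) ?(eq_sym q j) ?(eq_sym q l) //].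
  have nhr : ih != ir by rewrite eq_sym.
  have eM6 : M6 = (U_(ib) + U_(iG) + U_(ir))%MM by rewrite /M6 mr.
  exists ir; split=> //.
  - by rewrite eM6 eM1 [X in lexlt X _]rot3 [X in lexlt X _]sw12 [X in lexlt _ X]sw12 lexlt_tri // max_cond.
  - by rewrite eM6 eM5 [X in lexlt X _]rot3 [X in lexlt X _]rot3 lexlt_tri // max_cond.
  - by split; [rewrite eq_sym eM6 eM1 tri_neq | rewrite eM6 eM5 tri_neq].
have Pl : forall x y, Plt ord x y = (index x ord < index y ord)%N by [].
split.
- move=> /HA [h2|[dd h6]].
    move: h2; rewrite /L; case: ifP => hx h2.
      by constructor 1; split=> //; rewrite !Pl -eh -eb -eD -eB -c21.
    by constructor 3; split; [rewrite hX hx | rewrite !Pl -eh -ed -ea -eG -c25].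
  have [ir [er eM6 c61 c65 [n61 n65]]] := R6 dd.
  move: h6; rewrite /L; case: ifP => hx h6.
    have h6' : lexlt M6 M1 by move: h6; rewrite /lexle (negbTE n61).
    by constructor 2; split=> //; rewrite !Pl -er -ea -eG -eB -c61.
  have h6' : lexlt M6 M5 by move: h6; rewrite /lexle (negbTE n65).
  by constructor 4; split=> //; [rewrite hX hx | rewrite !Pl -er -ed -eb -eD -c65].
- case=> [[hx c]|[hx dd c]|[hx c]|[hx dd c]].
  + by move: c; rewrite !Pl -eh -eb -eD -eB => c; apply: HB; rewrite /L hx c21.
  + have [ir [er eM6 c61 c65 [n61 n65]]] := R6 dd.
    by move: c; rewrite !Pl -er -ea -eG -eB => c; apply: HC => //; rewrite /L hx c61.
  + have hx' : lexlt M5 M1 = false by apply/negbTE/lexlt_asym.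
    by move: c; rewrite !Pl -eh -ed -ea -eG => c; apply: HB; rewrite /L hx' c25.
  + have hx' : lexlt M5 M1 = false by apply/negbTE/lexlt_asym.
    have [ir [er eM6 c61 c65 [n61 n65]]] := R6 dd.
    by move: c; rewrite !Pl -er -ed -eb -eD => c; apply: HC => //; rewrite /L hx' c65.
Qed.
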